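(* Fix $s>2$ and $\mu^*>0$. Then for every $\mu_1>\mu^*$ there exists $\epsilon>0$ such that, for all $\mu\in[\mu^*,\mu_1]$, $d\theta(f_{s,\mu})\ge\epsilon$ on $K_\mu\setminus\Delta$.
   Context: $f_{s,\mu}$ is the repressilator vector field $\dot x=\frac{\mu}{1+y^s}-x$, $\dot y=\frac{\mu}{1+z^s}-y$, $\dot z=\frac{\mu}{1+x^s}-z$ on $\mathbb{R}^3_+$. For $\mu>0$, $K_\mu:=\{(x,y,z)\colon\frac{\mu}{2+\mu^s}\le x,y,z\le\mu\}$. $\Delta:=\mathrm{span}\{(1,1,1)\}$; $\|\mathbf{x}_\perp\|^2=\tfrac23(x^2+y^2+z^2-xy-yz-zx)$; $d\theta:=\frac{1}{\sqrt3}\frac{(z-y)dx+(x-z)dy+(y-x)dz}{\|\mathbf{x}_\perp\|^2}$ on $\mathbb{R}^3\setminus\Delta$. *)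

(* Defs.v *)
From Stdlib Require Import Reals.
Open Scope R_scope.

(* Real power t^s for t > 0 (all points considered have positive coordinates). *)
Definition rpow (t s : R) : R := Rpower t s.

Definition rep_f1 (s mu x y z : R) : R := mu / (1 + rpow y s) - x.
Definition rep_f2 (s mu x y z : R) : R := mu / (1 + rpow z s) - y.
Definition rep_f3 (s mu x y z : R) : R := mu / (1 + rpow x s) - z.

Definition in_K (s mu x y z : R) : Prop :=
  mu / (2 + rpow mu s) <= x <= mu /\
  mu / (2 + rpow mu s) <= y <= mu /\
  mu / (2 + rpow mu s) <= z <= mu.

Definition in_Delta (x y z : R) : Prop := x = y /\ y = z.

(* ||x_perp||^2 *)
Definition perp_sq (x y z : R) : R :=
  2 / 3 * (x ^ 2 + y ^ 2 + z ^ 2 - x * y - y * z - z * x).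

Definition dtheta (x y z v1 v2 v3 : R) : R :=
  / sqrt 3 * (((z - y) * v1 + (x - z) * v2 + (y - x) * v3) / perp_sq x y z).

Definition dtheta_f (s mu x y z : R) : R :=
  dtheta x y z (rep_f1 s mu x y z) (rep_f2 s mu x y z) (rep_f3 s mu x y z).

(* Main.v *)
Require Import Defs.
From Stdlib Require Import Reals Lra Psatz.
Open Scope R_scope.

Lemma core (x y z hx hy hz : R) :
  (x <= y -> hy <= hx) -> (y <= x -> hx <= hy) ->
  (y <= z -> hz <= hy) -> (z <= y -> hy <= hz) ->
  (x <= z -> hz <= hx) -> (z <= x -> hx <= hz) ->
  0 <= x*(hz-hx)+y*(hx-hy)+z*(hy-hz).
Proof.
  intros H1 H2 H3 H4 H5 H6.
  destruct (Rle_dec x y); destruct (Rle_dec y z); destruct (Rle_dec x z);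
  repeat match goal with H : ~ _ <= _ |- _ => apply Rnot_le_lt in H end.
  all: try (pose proof (H1 ltac:(lra))); try (pose proof (H2 ltac:(lra)));
       try (pose proof (H3 ltac:(lra))); try (pose proof (H4 ltac:(lra)));
       try (pose proof (H5 ltac:(lra))); try (pose proof (H6 ltac:(lra))).
  all: nra.
Qed.

Lemma Rpower_pos' (a b : R) : 0 < Rpower a b.
Proof. unfold Rpower; apply exp_pos. Qed.

Lemma gbound (s mustar mu mu1 a u v : R) :
  1 <= s -> 0 < mustar -> mustar <= mu -> 0 < a -> a <= u -> u <= v -> v <= mu1 ->
  mu / (1 + Rpower v s) + mustar * Rpower a (s-1) / (1 + Rpower mu1 s)^2 * v
  <= mu / (1 + Rpower u s) + mustar * Rpower a (s-1) / (1 + Rpower mu1 s)^2 * u.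
Proof.
  intros hs hm hmu ha hau huv hv.
  assert (Hsplit : forall w, 0 < w -> Rpower w s = Rpower w (s-1) * w).
  { intros w hw. rewrite <- (Rpower_1 w hw) at 3. rewrite <- Rpower_plus. f_equal; ring. }
  set (A := Rpower a (s-1)).
  assert (hA : 0 < A) by apply Rpower_pos'.
  assert (hAu : A <= Rpower u (s-1)) by (apply Rle_Rpower_l; lra).
  assert (hAv : Rpower u (s-1) <= Rpower v (s-1)) by (apply Rle_Rpower_l; lra).
  assert (hVU : A * (v - u) <= Rpower v s - Rpower u s).
  { rewrite (Hsplit v), (Hsplit u) by lra. nra. }
  assert (hU : 0 < Rpower u s) by apply Rpower_pos'.
  assert (hVB : Rpower v s <= Rpower mu1 s) by (apply Rle_Rpower_l; lra).
  assert (hUV : Rpower u s <= Rpower v s) by (apply Rle_Rpower_l; lra).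
  set (U := Rpower u s) in *. set (V := Rpower v s) in *. set (P := Rpower mu1 s) in *.
  assert (E : mu / (1 + U) - mu / (1 + V) = mu * (V - U) * / ((1+U)*(1+V))) by (field; lra).
  assert (K : mustar * A / (1 + P)^2 * (v - u) <= mu * (V - U) * / ((1+U)*(1+V))).
  { replace (mustar * A / (1 + P)^2 * (v - u)) with (mustar * (A * (v-u)) * / (1+P)^2)
      by (field; lra).
    apply Rmult_le_compat.
    - apply Rmult_le_pos; [lra| apply Rmult_le_pos; lra].
    - left; apply Rinv_0_lt_compat; apply pow_lt; lra.
    - apply Rmult_le_compat; try lra. apply Rmult_le_pos; lra.
    - apply Rinv_le_contravar; [apply Rmult_lt_0_compat; lra|].
      simpl. rewrite Rmult_1_r. apply Rmult_le_compat; lra. }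
  lra.
Qed.

Theorem proposition4 (s mustar : R) (hs : 2 < s) (hmu : 0 < mustar) :
  forall mu1 : R, mustar < mu1 ->
  exists eps : R, 0 < eps /\
    forall mu : R, mustar <= mu <= mu1 ->
    forall x y z : R, in_K s mu x y z -> ~ in_Delta x y z ->
      eps <= dtheta_f s mu x y z.
Proof.
  intros mu1 hmu1.
  set (a := mustar / (2 + Rpower mu1 s)).
  set (L := mustar * Rpower a (s-1) / (1 + Rpower mu1 s)^2).
  assert (hP1 : 0 < Rpower mu1 s) by apply Rpower_pos'.
  assert (ha : 0 < a) by (unfold a; apply Rdiv_lt_0_compat; lra).
  assert (hL : 0 < L).
  { unfold L. apply Rdiv_lt_0_compat. apply Rmult_lt_0_compat; [lra| apply Rpower_pos'].
    apply pow_lt; lra. }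
  assert (hs3 : 0 < / sqrt 3) by (apply Rinv_0_lt_compat, sqrt_lt_R0; lra).
  exists (/ sqrt 3 * (3/2 * L)). split; [nra|].
  intros mu [hm1 hm2] x y z HK HD.
  assert (hma : a <= mu / (2 + rpow mu s)).
  { unfold a, rpow. assert (Rpower mu s <= Rpower mu1 s) by (apply Rle_Rpower_l; lra).
    assert (0 < Rpower mu s) by apply Rpower_pos'.
    unfold Rdiv. apply Rmult_le_compat; try lra.
    left; apply Rinv_0_lt_compat; lra.
    apply Rinv_le_contravar; lra. }
  unfold in_K in HK. destruct HK as [[hx1 hx2] [[hy1 hy2] [hz1 hz2]]].
  assert (G : forall u v, a <= u -> u <= v -> v <= mu1 ->
     mu / (1 + Rpower v s) + L * v <= mu / (1 + Rpower u s) + L * u).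
  { intros u v h1 h2 h3. unfold L. apply (gbound s mustar mu mu1 a u v); lra. }
  set (gx := mu / (1 + Rpower x s)). set (gy := mu / (1 + Rpower y s)).
  set (gz := mu / (1 + Rpower z s)).
  assert (HN : L * (x^2+y^2+z^2-x*y-y*z-z*x) <= x*(gz-gx)+y*(gx-gy)+z*(gy-gz)).
  { pose proof (core x y z (gx + L*x) (gy + L*y) (gz + L*z)) as C.
    assert (0 <= x*((gz+L*z)-(gx+L*x))+y*((gx+L*x)-(gy+L*y))+z*((gy+L*y)-(gz+L*z))).
    { apply C; intro; unfold gx, gy, gz; apply G; lra. }
    nra. }
  set (Q := x^2+y^2+z^2-x*y-y*z-z*x) in *.
  assert (hQ : 0 < Q).
  { unfold in_Delta in HD. unfold Q.
    destruct (Req_dec x y) as [e|e].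
    - assert (y - z <> 0) by (intro; apply HD; split; lra).
      pose proof (Rsqr_pos_lt _ H). unfold Rsqr in *. nra.
    - assert (x - y <> 0) by lra.
      pose proof (Rsqr_pos_lt _ H). unfold Rsqr in *.
      assert (0 <= (y-z)*(y-z)) by apply Rle_0_sqr.
      assert (0 <= (z-x)*(z-x)) by apply Rle_0_sqr.
      assert (2*(x ^ 2 + y ^ 2 + z ^ 2 - x * y - y * z - z * x) = (x-y)*(x-y)+(y-z)*(y-z)+(z-x)*(z-x)) by ring.
      lra. }
  unfold dtheta_f, dtheta, rep_f1, rep_f2, rep_f3, perp_sq, rpow.
  fold gx gy gz.
  apply Rmult_le_compat_l; [lra|].
  replace (x ^ 2 + y ^ 2 + z ^ 2 - x * y - y * z - z * x) with Q by (unfold Q; ring).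
  replace ((z - y) * (gy - x) + (x - z) * (gz - y) + (y - x) * (gx - z))
    with (x*(gz-gx)+y*(gx-gy)+z*(gy-gz)) by ring.
  set (N := x*(gz-gx)+y*(gx-gy)+z*(gy-gz)) in *.
  assert (E : N / (2/3*Q) - 3/2*L = 3/2 * ((N - L*Q) / Q)) by (field; lra).
  assert (0 <= (N - L*Q)/Q) by (apply Rmult_le_pos; [lra| left; apply Rinv_0_lt_compat; lra]).
  lra.
Qed.
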